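(* Let $r_1,r_2$ be positive integers. Then $\psi_{d,\min}(M_{r_1,r_2}(K_2))=2$ if and only if $r_1\ge 2$ and $r_2\ge 2$. Moreover, if $r_1,r_2\ge 2$ then there is a homomorphism $M_{r_1,r_2}(K_2)\to S_4$, while for all positive integers $r$ and $m$ there is no homomorphism $M_{1,r}(K_2)\to S_m$ and no homomorphism $M_{r,1}(K_2)\to S_m$.
   Context: For a graph $G$ and positive integer $r$, the generalized Mycielskian $M_r(G)$ has vertex set $\{(v,i):v\in V(G),0\le i\le r-1\}\cup\{z\}$, with $(u,i)$ adjacent to $(v,j)$ iff $\{u,v\}\in E(G)$ and ($|i-j|=1$ or $i=j=0$), and $z$ adjacent to all $(v,r-1)$, $v\in V(G)$. $M_{r_1,r_2}(G)=M_{r_2}(M_{r_1}(G))$. For a digraph $D$, $N_+[v]=\{v\}\cup\{u:(v,u)\in E(D)\}$, $c(U)=\{c(u):u\in U\}$, and $\psi_d(D)=\min_c\max_v|c(N_+[v])|$ over proper colorings $c$ of the underlying graph; $\psi_{d,\min}(G)$ is the minimum of $\psi_d(\vec G)$ over all orientations $\vec G$ of $G$. The symmetric shift graph $S_m$ has vertex set $\{(i,j):1\le i,j\le m,\ i\ne j\}$, and $(i,j)$ is adjacent to $(k,\ell)$ iff $j=k$ or $i=\ell$. *)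

(* Defs.v *)
From mathcomp Require Import all_boot.
Set Implicit Arguments. Unset Strict Implicit. Unset Printing Implicit Defensive.

Definition graph_hom (V W : finType) (a : rel V) (b : rel W) (f : V -> W) : Prop :=
  forall x y, a x y -> b (f x) (f y).

Definition K2 : rel 'I_2 := fun x y => x != y.

(* Generalized Mycielskian M_r(G): vertices (v,i) with i < r, encoded as
   Some (v,i), and the apex z encoded as None. *)
Definition myc (V : finType) (adj : rel V) (r : nat) : rel (option (V * 'I_r)) :=
  fun x y =>
    match x, y with
    | Some (u, i), Some (v, j) =>
        adj u v && [|| (i.+1 == j :> nat), (j.+1 == i :> nat)
                     | ((i == 0 :> nat) && (j == 0 :> nat))]
    | None, Some (_, j) => (j == r.-1 :> nat)
    | Some (_, i), None => (i == r.-1 :> nat)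
    | None, None => false
    end.

Arguments myc : clear implicits.

(* M_{r1,r2}(K_2) = M_{r2}(M_{r1}(K_2)). *)
Definition M2K2 (r1 r2 : nat) :=
  myc (option ('I_2 * 'I_r1) : finType) (myc ('I_2 : finType) K2 r1) r2.
Arguments M2K2 : clear implicits.

(* Symmetric shift graph S_m: vertices (i,j), i <> j, in {0..m-1}
   (shifted from {1..m}); (i,j) ~ (k,l) iff j = k or i = l. *)
Definition shift_vert (m : nat) := {p : 'I_m * 'I_m | p.1 != p.2}.
Definition shift_adj (m : nat) : rel (shift_vert m) :=
  fun x y => ((val x).2 == (val y).1) || ((val x).1 == (val y).2).

Definition orientation (V : finType) (adj : rel V) (o : rel V) : Prop :=
  (forall x y, o x y -> adj x y) /\
  (forall x y, adj x y -> o x y || o y x) /\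
  (forall x y, ~~ (o x y && o y x)).

Definition proper_col (V : finType) (adj : rel V) (c : V -> nat) : Prop :=
  forall x y, adj x y -> c x != c y.

Definition out_closed (V : finType) (o : rel V) (v : V) : seq V :=
  [seq u <- enum V | (u == v) || o v u].

Definition ncol (V : finType) (o : rel V) (c : V -> nat) (v : V) : nat :=
  size (undup [seq c u | u <- out_closed o v]).

(* psi_{d,min}(G) = k, i.e. min over orientations o and proper colourings c
   of max_v |c(N_+[v])| equals k: some (o,c) achieves max <= k, and every
   (o,c) has max >= k. *)
Definition psi_dmin_is (V : finType) (adj : rel V) (k : nat) : Prop :=
  (exists o c, orientation adj o /\ proper_col adj c /\ forall v, ncol o c v <= k) /\
  (forall o c, orientation adj o -> proper_col adj c -> exists v, k <= ncol o c v).

(* Main.v *)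
Require Import Defs.
From mathcomp Require Import all_boot zify.
Set Implicit Arguments. Unset Strict Implicit. Unset Printing Implicit Defensive.

Definition sadj (p q : nat * nat) := (p.2 == q.1) || (p.1 == q.2).
Definition shom (V : finType) (a : rel V) (f : V -> nat * nat) :=
  (forall v, (f v).1 != (f v).2) /\ (forall x y, a x y -> sadj (f x) (f y)).

Lemma sadj_uniq (x y z w : nat * nat) : x.1 != x.2 -> y.1 != y.2 -> z.1 != z.2 -> w.1 != w.2 ->
  sadj y z -> sadj x y -> sadj x z -> sadj w y -> sadj w z -> w = x.
Proof.
case: x => x1 x2; case: y => y1 y2; case: z => z1 z2; case: w => w1 w2; rewrite /sadj /=.
move=> *; suff [-> ->] : w1 = x1 /\ w2 = x2 by []; lia.
Qed.

Lemma sadjC p q : sadj p q = sadj q p.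
Proof. by rewrite /sadj orbC; congr orb; apply: eq_sym. Qed.

Lemma sadj_nl p : p.1 != p.2 -> ~~ sadj p p.
Proof. by case: p => a b; rewrite /sadj /= eq_sym orbb. Qed.

Lemma hom_shom (V : finType) (a : rel V) m (f : V -> shift_vert m) :
  graph_hom a (@shift_adj m) f ->
  shom a (fun v => (nat_of_ord (val (f v)).1, nat_of_ord (val (f v)).2)).
Proof. move=> hf; split; first by move=> v; exact: (valP (f v)). by move=> x y /hf. Qed.

Lemma adj_step (V : finType) (a : rel V) r u v k (hk : k.+1 < r) (hk' : k < r) :
  a u v -> myc V a r (Some (u, Ordinal hk)) (Some (v, Ordinal hk')).
Proof. by move=> h /=; rewrite h eqxx orbT. Qed.
Lemma adj_0 (V : finType) (a : rel V) r u v (h0 : 0 < r) :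
  a u v -> myc V a r (Some (u, Ordinal h0)) (Some (v, Ordinal h0)).
Proof. by move=> h; rewrite /= h. Qed.
Lemma adj_top (V : finType) (a : rel V) r u (h : r.-1 < r) :
  myc V a r None (Some (u, Ordinal h)).
Proof. by rewrite /= eqxx. Qed.

Definition K3 := myc ('I_2 : finType) K2 1.
Definition ka : option ('I_2 * 'I_1) := None.
Definition kb : option ('I_2 * 'I_1) := Some (ord0, ord0).
Definition kc : option ('I_2 * 'I_1) := Some (Ordinal (isT : 1 < 2), ord0).

Lemma noshom1 r f : 0 < r -> ~ shom (M2K2 1 r) f.
Proof.
move=> hr [nl hf].
set A := f (Some (ka, Ordinal hr)); set B := f (Some (kb, Ordinal hr)); set C := f (Some (kc, Ordinal hr)).
have AB : sadj A B by apply: hf; apply: adj_0.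
have AC : sadj A C by apply: hf; apply: adj_0.
have BC : sadj B C by apply: hf; apply: adj_0.
have BA : sadj B A by rewrite sadjC.
have CA : sadj C A by rewrite sadjC.
have CB : sadj C B by rewrite sadjC.
have key : forall k (hk : k < r), [/\ f (Some (ka, Ordinal hk)) = A,
   f (Some (kb, Ordinal hk)) = B & f (Some (kc, Ordinal hk)) = C].
  elim=> [|k IH] hk.
    by have -> : Ordinal hk = Ordinal hr by apply/val_inj.
  have hk' : k < r by apply: ltnW.
  have [eA eB eC] := IH hk'.
  have e : forall u v w, K3 u v -> K3 u w -> sadj (f (Some (u, Ordinal hk))) (f (Some (v, Ordinal hk')))
     /\ sadj (f (Some (u, Ordinal hk))) (f (Some (w, Ordinal hk'))).
    by move=> u v w h1 h2; split; apply: hf; apply: adj_step.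
  have [a1 a2] := e ka kb kc isT isT.
  have [b1 b2] := e kb ka kc isT isT.
  have [c1 c2] := e kc ka kb isT isT.
  rewrite eA eB eC in a1 a2 b1 b2 c1 c2.
  split.
  - exact: (sadj_uniq (nl _) (nl _) (nl _) (nl _) BC AB AC).
  - exact: (sadj_uniq (nl _) (nl _) (nl _) (nl _) AC BA BC).
  - exact: (sadj_uniq (nl _) (nl _) (nl _) (nl _) AB CA CB).
have hr' : r.-1 < r by lia.
have [eA eB eC] := key _ hr'.
have zA : sadj (f None) A by rewrite -eA; apply: hf; apply: adj_top.
have zB : sadj (f None) B by rewrite -eB; apply: hf; apply: adj_top.
have zC : sadj (f None) C by rewrite -eC; apply: hf; apply: adj_top.
have e := sadj_uniq (nl _) (nl _) (nl _) (nl _) BC AB AC zB zC.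
by move: zA; rewrite e; apply/negP/sadj_nl/nl.
Qed.

Lemma bool1 (a b c d : bool) : a != d -> b != c -> c != d -> a != b.
Proof. by case: a; case: b; case: c; case: d. Qed.
Lemma bool2 (a b c : bool) : a != b -> c != a -> c != b -> False.
Proof. by case: a; case: b; case: c. Qed.

Lemma noshom2 r f : 0 < r -> ~ shom (M2K2 r 1) f.
Proof.
move=> hr [nl hf].
set q := (f None).2.
pose bb (x : option ('I_2 * 'I_r)) := ((f (Some (x, ord0))).1 == q).
have hub : forall x, sadj (f (Some (x, ord0))) (f None).
  by move=> x; rewrite sadjC; apply: hf.
have bbE : forall x y, myc ('I_2 : finType) K2 r x y -> bb x != bb y.
  move=> x y hxy.
  have hxy' : sadj (f (Some (x, ord0))) (f (Some (y, ord0))) by apply: hf; rewrite /= hxy.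
  move: (hub x) (hub y) hxy' (nl (Some (x, ord0))) (nl (Some (y, ord0))) (nl None).
  rewrite /bb /q /sadj.
  case: (f (Some (x, ord0))) => x1 x2; case: (f (Some (y, ord0))) => y1 y2; case: (f None) => h1 h2 /=.
  by case: (x1 =P h2); case: (y1 =P h2) => //= *; lia.
pose o1 : 'I_2 := Ordinal (isT : 1 < 2).
have key : forall k (hk : k < r), bb (Some (ord0, Ordinal hk)) != bb (Some (o1, Ordinal hk)).
  elim=> [|k IH] hk; first by apply: bbE; apply: adj_0.
  have hk' : k < r by apply: ltnW.
  apply: (bool1 _ _ (IH hk')); apply: bbE; exact: adj_step.
have hr' : r.-1 < r by lia.
apply: (bool2 (key _ hr')); apply: bbE; exact: adj_top.
Qed.
Lemma mem_nc (V : finType) (o : rel V) (c : V -> nat) v u :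
  (u == v) || o v u -> c u \in [seq c w | w <- out_closed o v].
Proof. by move=> h; apply: map_f; rewrite mem_filter h mem_enum. Qed.

Lemma ncol2 (V : finType) (o : rel V) (c : V -> nat) v x y :
  x \in [seq c w | w <- out_closed o v] -> y \in [seq c w | w <- out_closed o v] -> x != y ->
  2 <= ncol o c v.
Proof.
move=> hx hy nxy; rewrite /ncol.
have -> : 2 = size [:: x; y] by [].
by apply: uniq_leq_size; [rewrite /= inE nxy | move=> z; rewrite !inE mem_undup => /orP[]/eqP->].
Qed.

Lemma ncol3 (V : finType) (o : rel V) (c : V -> nat) v x y z :
  x \in [seq c w | w <- out_closed o v] -> y \in [seq c w | w <- out_closed o v] ->
  z \in [seq c w | w <- out_closed o v] -> x != y -> x != z -> y != z ->
  3 <= ncol o c v.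
Proof.
move=> hx hy hz nxy nxz nyz; rewrite /ncol.
have -> : 3 = size [:: x; y; z] by [].
apply: uniq_leq_size; first by rewrite /= !inE negb_or nxy nxz nyz.
by move=> w; rewrite !inE mem_undup => /orP[/eqP->|/orP[]/eqP->].
Qed.

Lemma psi_lb (V : finType) (a : rel V) x0 y0 : a x0 y0 ->
  forall o c, orientation a o -> proper_col a c -> exists v, 2 <= ncol o c v.
Proof.
move=> h o c [o1 [o2 o3]] pc; case/orP: (o2 _ _ h) => oxy.
- exists x0; apply: (@ncol2 _ _ _ _ (c x0) (c y0)); [apply: mem_nc; by rewrite eqxx| apply: mem_nc; by rewrite oxy orbT| exact: pc].
- exists y0; apply: (@ncol2 _ _ _ _ (c y0) (c x0)); [apply: mem_nc; by rewrite eqxx| apply: mem_nc; by rewrite oxy orbT| apply: pc; exact: o1].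
Qed.

Lemma psi_shom (V : finType) (a : rel V) :
  (exists o c, orientation a o /\ proper_col a c /\ forall v, ncol o c v <= 2) -> exists f, shom a f.
Proof.
move=> [o [c [[o1 [o2 o3]] [pc hn]]]].
exists (fun v => (c v, if [pick u | o v u] is Some u then c u else (c v).+1)); split.
  move=> v /=; case: pickP => [u ou|_]; last by lia.
  exact: pc (o1 _ _ ou).
have key : forall x y, o x y -> (if [pick u | o x u] is Some u then c u else (c x).+1) = c y.
  move=> x y oxy; case: pickP => [u ou|]; last by move/(_ y); rewrite oxy.
  apply/eqP; apply/negPn/negP => ne.
  have := @ncol3 _ o c x (c x) (c u) (c y).
  rewrite !mem_nc ?eqxx ?ou ?oxy ?orbT //.
  move/(_ isT isT isT (pc _ _ (o1 _ _ ou)) (pc _ _ (o1 _ _ oxy)) ne).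
  by have := hn x; lia.
move=> x y h; rewrite /sadj /=; case/orP: (o2 _ _ h) => oxy.
  by rewrite (key _ _ oxy) eqxx.
by rewrite (key _ _ oxy) eqxx orbT.
Qed.

Lemma shom_psi (V : finType) (a : rel V) f : (forall x y, a x y -> a y x) -> shom a f ->
  (exists o c, orientation a o /\ proper_col a c /\ forall v, ncol o c v <= 2).
Proof.
move=> hs [nl hf].
exists (fun x y => a x y && ((f x).2 == (f y).1) && (((f y).2 != (f x).1) || (enum_rank x < enum_rank y))).
exists (fun v => (f v).1).
have neq : forall x y, a x y -> (enum_rank x : nat) != enum_rank y.
  move=> x y h; apply/negP => /eqP/val_inj/enum_rank_inj e; subst y.
  by move: (hf _ _ h); apply/negP/sadj_nl/nl.
split; [split; [|split]|split].
- by move=> x y /andP[/andP[]].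
- move=> x y h; rewrite h (hs _ _ h) /=.
  move: (hf _ _ h) (nl x) (nl y) (neq _ _ h); rewrite /sadj.
  case: (f x) => x1 x2; case: (f y) => y1 y2 /=; lia.
- move=> x y; apply/negP; case/andP=> /andP[/andP[_ e1] e2] /andP[/andP[_ e3] e4].
  move: e1 e2 e3 e4; case: (f x) => x1 x2; case: (f y) => y1 y2 /=; lia.
- move=> x y h; move: (hf _ _ h) (nl x) (nl y); rewrite /sadj.
  case: (f x) => x1 x2; case: (f y) => y1 y2 /=; lia.
- move=> v; rewrite /ncol.
  have -> : 2 = size [:: (f v).1; (f v).2] by [].
  apply: uniq_leq_size; first exact: undup_uniq.
  move=> z; rewrite mem_undup => /mapP[u]; rewrite mem_filter mem_enum andbT => /orP[/eqP->|ou] ->.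
    by rewrite inE eqxx.
  by case/andP: ou => /andP[_ /eqP <-] _; rewrite !inE eqxx orbT.
Qed.

Definition lv r (i : 'I_r) : 'I_2 := inord (i - (r - 2)).
Lemma lvE r (i : 'I_r) : 2 <= r -> (lv i : nat) = i - (r - 2).
Proof. move=> hr; rewrite /lv inordK //; have := ltn_ord i; lia. Qed.
Definition mfold (V W : finType) (phi : V -> W) r (x : option (V * 'I_r)) : option (W * 'I_2) :=
  match x with None => None | Some (u, i) => Some (phi u, lv i) end.
Lemma mfold_hom (V W : finType) (a : rel V) (b : rel W) phi r : 2 <= r -> graph_hom a b phi ->
  graph_hom (myc V a r) (myc W b 2) (@mfold V W phi r).
Proof.
move=> hr hphi [[u i]|] [[v j]|] //=; rewrite ?lvE //.
- case/andP=> /hphi -> /= H; move: H (ltn_ord i) (ltn_ord j); lia.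
- move: (ltn_ord i); lia.
- move: (ltn_ord j); lia.
Qed.

Definition V11 := option (option ('I_2 * 'I_2) * 'I_2).
Definition A11 : rel V11 := myc (option ('I_2 * 'I_2) : finType) (myc ('I_2 : finType) K2 2) 2.
Definition code (x : V11) : nat :=
  match x with None => 0 | Some (None, i) => 1 + i
  | Some (Some (u, j), i) => 3 + u + 2 * j + 4 * i end.
Notation sv a b := (@exist _ (fun p : 'I_4 * 'I_4 => p.1 != p.2) (@Ordinal 4 a isT, @Ordinal 4 b isT) isT).
Definition dsv : shift_vert 4 := sv 0 1.
Definition tbl : seq (shift_vert 4) := [:: sv 0 1; sv 0 2; sv 1 2; sv 0 3; sv 3 1; sv 2 3; sv 2 0; sv 1 2; sv 3 0; sv 1 0; sv 1 0].
Definition g11 (x : V11) : shift_vert 4 := nth dsv tbl (code x).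
Lemma case2 (P : 'I_2 -> Prop) : P ord0 -> P (@Ordinal 2 1 isT) -> forall i, P i.
Proof.
move=> H0 H1 [[|[|k]] Hk] //.
- by have -> : Ordinal Hk = ord0 by apply/val_inj.
- by have -> : Ordinal Hk = Ordinal (isT : 1 < 2) by apply/val_inj.
Qed.
Lemma caseV (P : V11 -> Prop) :
  P None -> (forall i, P (Some (None, i))) -> (forall u j i, P (Some (Some (u, j), i))) -> forall x, P x.
Proof. by move=> H0 H1 H2 [[[[u j]|] i]|]. Qed.
Lemma g11_hom : graph_hom A11 (@shift_adj 4) g11.
Proof.
move=> x y.
elim/caseV: x; [| elim/case2 | elim/case2; elim/case2; elim/case2];
(elim/caseV: y; [| elim/case2 | elim/case2; elim/case2; elim/case2]); by [].
Qed.

Lemma myc_sym (V : finType) (a : rel V) r : (forall x y, a x y -> a y x) ->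
  forall x y, myc V a r x y -> myc V a r y x.
Proof.
move=> hs [[u i]|] [[v j]|] //= /andP[/hs -> H] /=; move: H; lia.
Qed.

Lemma K2_sym : forall x y, K2 x y -> K2 y x.
Proof. by move=> x y; rewrite /K2 eq_sym. Qed.

Lemma part2 r1 r2 : 2 <= r1 -> 2 <= r2 -> exists f, graph_hom (M2K2 r1 r2) (@shift_adj 4) f.
Proof.
move=> h1 h2.
exists (fun x => g11 (@mfold _ _ (@mfold ('I_2 : finType) ('I_2 : finType) id r1) r2 x)).
move=> x y hxy; apply: g11_hom.
apply: (mfold_hom h2 _ hxy).
by apply: mfold_hom.
Qed.

Theorem mainTheorem7 (r1 r2 : nat) (hr1 : 0 < r1) (hr2 : 0 < r2) :
  (psi_dmin_is (M2K2 r1 r2) 2 <-> (2 <= r1 /\ 2 <= r2)) /\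
  (2 <= r1 -> 2 <= r2 ->
     exists f, graph_hom (M2K2 r1 r2) (@shift_adj 4) f) /\
  (forall r m : nat, 0 < r -> 0 < m ->
     (~ exists f, graph_hom (M2K2 1 r) (@shift_adj m) f) /\
     (~ exists f, graph_hom (M2K2 r 1) (@shift_adj m) f)).
Proof.
split; last split.
- split.
  + move=> [ex _]; have [f hf] := psi_shom ex.
    split; rewrite leqNgt; apply/negP => h.
      have e : r1 = 1 by lia.
      by subst r1; exact: (noshom1 hr2 hf).
    have e : r2 = 1 by lia.
    by subst r2; exact: (noshom2 hr1 hf).
  + move=> [h1 h2]; have [g hg] := part2 h1 h2.
    split.
      apply: (shom_psi _ (hom_shom hg)).
      by apply: myc_sym; apply: myc_sym; exact: K2_sym.
    have hr' : r2.-1 < r2 by lia.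
    apply: (@psi_lb _ _ None (Some (None, Ordinal hr'))).
    exact: adj_top.
- exact: part2.
- move=> r m hr hm; split.
  + by case=> f /hom_shom; apply: noshom1.
  + by case=> f /hom_shom; apply: noshom2.
Qed.
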